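(* Let $1\le s<t$. One can assign to each word $w\in W$ a pair of rational numbers $(a_w,b_w)\in\mathbb{Q}_{>2}^2$, the corresponding linear map $\ell_w:x\mapsto a_wx+b_w$, and a value $r_w\in(s,t)$ such that: (i) for all $v,w\in W$, if $v\le_W w$ and $v\ne w$, then $a_v<a_w$ and $b_v<b_w$ (and thus in particular $\ell_v<\ell_w$ on $(s,t)$); (ii) for all $v,w\in W$, if $v\not\le_W w$, then $\ell_v(r_v)>\ell_w(r_v)$ (and in particular $\ell_v\not\le\ell_w$ pointwise on $(s,t)$).
   Context: $W=\{0,1\}^*$ is the set of finite binary words; $w\le_W w'$ iff $w'$ is a prefix (initial segment) of $w$. $\mathbb{Q}_{>2}$ denotes the rational numbers greater than $2$. *)

(* Defs.v *)
From Stdlib Require Import Reals QArith List.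
Open Scope R_scope.

Definition word := list bool.

Definition is_prefix (u v : word) : Prop := exists z, v = u ++ z.

Definition leW (w w' : word) : Prop := is_prefix w' w.

Definition linmap (a b : Q) (x : R) : R := Q2R a * x + Q2R b.

(* Main.v *)
Require Import Defs.
From Stdlib Require Import Reals QArith List Qreals Lra Lia Psatz ZArith.
Open Scope R_scope.

Lemma Q2R_Z (z : Z) : Q2R (z # 1) = IZR z.
Proof. unfold Q2R; simpl. rewrite Rinv_1; ring. Qed.

Lemma Q2R_0 : Q2R 0 = 0.
Proof. rewrite Q2R_Z; reflexivity. Qed.

Lemma Q2R_divZ (x : Q) (z : Z) : (z # 1 == 0)%Q -> False -> True.
Proof. auto. Qed.

Lemma Q2R_divc (x : Q) (z : positive) : Q2R (x / (Zpos z # 1)) = Q2R x / IZR (Zpos z).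
Proof.
  rewrite Q2R_div. rewrite Q2R_Z; reflexivity.
  intro H. apply Qeq_eqR in H. rewrite Q2R_Z, Q2R_0 in H.
  pose proof (IZR_lt 0 (Zpos z) (eq_refl)). lra.
Qed.

Lemma dense_Q (x y : R) : x < y -> exists q : Q, x < Q2R q < y.
Proof.
  intros Hxy.
  set (N := up (/ (y - x))).
  destruct (archimed (/ (y - x))) as [HN1 HN2]. fold N in HN1, HN2.
  assert (Hinv : 0 < / (y - x)) by (apply Rinv_0_lt_compat; lra).
  assert (HNpos : (0 < N)%Z) by (apply lt_IZR; lra).
  assert (HN1' : 1 < IZR N * (y - x)).
  { replace 1 with (/ (y - x) * (y - x)) by (field; lra).
    apply Rmult_lt_compat_r; lra. }
  set (k := up (x * IZR N)).
  destruct (archimed (x * IZR N)) as [Hk1 Hk2]. fold k in Hk1, Hk2.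
  exists (k # Z.to_pos N).
  unfold Q2R; simpl. rewrite Z2Pos.id by exact HNpos.
  assert (HNR : 0 < IZR N) by (apply IZR_lt; exact HNpos).
  split.
  - apply (Rmult_lt_reg_r (IZR N)); auto.
    rewrite Rmult_assoc, Rinv_l by lra. lra.
  - apply (Rmult_lt_reg_r (IZR N)); auto.
    rewrite Rmult_assoc, Rinv_l by lra. lra.
Qed.

Lemma split_words (v w : word) :
  (exists z, v = w ++ z) \/ (exists b z, w = v ++ b :: z) \/
  (exists u b z1 z2, v = u ++ b :: z1 /\ w = u ++ negb b :: z2).
Proof.
  revert w; induction v as [|b1 v IH]; intros [|b2 w].
  - left; exists nil; reflexivity.
  - right; left; exists b2, w; reflexivity.
  - left; exists (b1 :: v); reflexivity.
  - destruct (IH w) as [[z Hz]|[[b [z Hz]]|[u [b [z1 [z2 [H1 H2]]]]]]].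
    + destruct (Bool.bool_dec b1 b2) as [e|ne].
      * subst; left; exists z; reflexivity.
      * right; right; exists nil, b1, v, w; simpl; split; auto.
        destruct b1, b2; simpl; congruence.
    + destruct (Bool.bool_dec b1 b2) as [e|ne].
      * subst; right; left; exists b, z; reflexivity.
      * right; right; exists nil, b1, v, w; simpl; split; auto.
        destruct b1, b2; simpl; congruence.
    + destruct (Bool.bool_dec b1 b2) as [e|ne].
      * subst; right; right; exists (b2 :: u), b, z1, z2; simpl; split; auto.
      * right; right; exists nil, b1, v, w; simpl; split; auto.
        destruct b1, b2; simpl; congruence.
Qed.

Section Constr.
Variables p L : Q.
Hypothesis Hp : 1 <= Q2R p.
Hypothesis HL : 0 < Q2R L.

Definition MM : Q := (2 # 1) * (p + L) + (1 # 1).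
Fixpoint hh (n : nat) : Q := match n with O => L / (2 # 1) | S k => hh k / (4 # 1) end.
Fixpoint ee (n : nat) : Q := match n with
  O => (1 # 1) / ((4 # 1) * MM) | S k => ee k * hh k / ((7 # 1) * MM) end.
Definition child (n : nat) (c : Q) (b : bool) : Q :=
  if b then (c + hh n / (2 # 1))%Q else (c - hh n / (2 # 1))%Q.
Definition sa (n : nat) (b : bool) : Q := if b then ee n else ((2 # 1) * ee n)%Q.
Definition sb (n : nat) (c : Q) (b : bool) : Q := if b then (ee n * ((1 # 1) + c))%Q else ee n.
Fixpoint al (n : nat) (c : Q) (w : word) : Q := match w with
  nil => 0%Q | b :: z => (sa n b + al (S n) (child n c b) z)%Q end.
Fixpoint be (n : nat) (c : Q) (w : word) : Q := match w with
  nil => 0%Q | b :: z => (sb n c b + be (S n) (child n c b) z)%Q end.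
Fixpoint cen (n : nat) (c : Q) (w : word) : Q := match w with
  nil => c | b :: z => cen (S n) (child n c b) z end.

Let P := Q2R p.
Let LL := Q2R L.
Let RM := 2 * (P + LL) + 1.

Lemma RM_eq : Q2R MM = RM.
Proof. unfold MM, RM, P, LL. rewrite Q2R_plus, Q2R_mult, Q2R_plus, !Q2R_Z. ring. Qed.

Lemma RM_ge3 : 3 <= RM.
Proof. unfold RM, P, LL; lra. Qed.

Lemma Rh0 : Q2R (hh 0) = LL / 2.
Proof. simpl. rewrite Q2R_divc. reflexivity. Qed.
Lemma RhS n : Q2R (hh (S n)) = Q2R (hh n) / 4.
Proof. simpl. rewrite Q2R_divc. reflexivity. Qed.
Lemma h_pos n : 0 < Q2R (hh n).
Proof. induction n. rewrite Rh0; unfold LL; lra. rewrite RhS; lra. Qed.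
Lemma h_le n : Q2R (hh n) <= LL / 2.
Proof. induction n. rewrite Rh0; lra. rewrite RhS; pose proof (h_pos n); lra. Qed.

Lemma Re0 : Q2R (ee 0) = 1 / (4 * RM).
Proof.
  simpl. rewrite Q2R_div, Q2R_mult, RM_eq, !Q2R_Z. reflexivity.
  intro H. apply Qeq_eqR in H. rewrite Q2R_mult, RM_eq, Q2R_Z, Q2R_0 in H.
  pose proof RM_ge3; nra.
Qed.
Lemma ReS n : Q2R (ee (S n)) = Q2R (ee n) * Q2R (hh n) / (7 * RM).
Proof.
  simpl. rewrite Q2R_div, !Q2R_mult, RM_eq, !Q2R_Z. reflexivity.
  intro H. apply Qeq_eqR in H. rewrite Q2R_mult, RM_eq, Q2R_Z, Q2R_0 in H.
  pose proof RM_ge3; nra.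
Qed.
Lemma e_pos n : 0 < Q2R (ee n).
Proof.
  pose proof RM_ge3.
  induction n. rewrite Re0. apply Rdiv_lt_0_compat; lra.
  rewrite ReS. pose proof (h_pos n). apply Rdiv_lt_0_compat; nra.
Qed.
Lemma e_half n : Q2R (ee (S n)) <= Q2R (ee n) / 2.
Proof.
  rewrite ReS. pose proof RM_ge3. pose proof (h_le n). pose proof (e_pos n).
  pose proof (h_pos n).
  apply (Rmult_le_reg_r (7 * RM)); [lra|].
  replace (Q2R (ee n) * Q2R (hh n) / (7 * RM) * (7 * RM)) with (Q2R (ee n) * Q2R (hh n)) by (field; lra).
  assert (Q2R (ee n) * Q2R (hh n) <= Q2R (ee n) * (LL/2)) by (apply Rmult_le_compat_l; lra).
  unfold RM, P, LL in *; nra.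
Qed.

Lemma Rchild n c b : Q2R (child n c b) =
  if b then Q2R c + Q2R (hh n) / 2 else Q2R c - Q2R (hh n) / 2.
Proof. destruct b; simpl; [rewrite Q2R_plus|rewrite Q2R_minus]; rewrite Q2R_divc; reflexivity. Qed.
Lemma Rsa n b : Q2R (sa n b) = if b then Q2R (ee n) else 2 * Q2R (ee n).
Proof. destruct b; simpl; auto. rewrite Q2R_mult, Q2R_Z; reflexivity. Qed.
Lemma Rsb n c b : Q2R (sb n c b) = if b then Q2R (ee n) * (1 + Q2R c) else Q2R (ee n).
Proof. destruct b; simpl; auto. rewrite Q2R_mult, Q2R_plus, Q2R_Z; reflexivity. Qed.

Definition Good n c := P + 2/3 * Q2R (hh n) <= Q2R c <= P + LL - 2/3 * Q2R (hh n).

Lemma good_child n c b : Good n c -> Good (S n) (child n c b).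
Proof.
  unfold Good; intros H. rewrite Rchild, RhS. pose proof (h_pos n).
  destruct b; lra.
Qed.

Lemma good_in n c : Good n c -> P < Q2R c < P + LL.
Proof. unfold Good; pose proof (h_pos n); lra. Qed.

Lemma cen_bound n c w : - (2/3 * Q2R (hh n)) <= Q2R (cen n c w) - Q2R c <= 2/3 * Q2R (hh n).
Proof.
  revert n c; induction w as [|b z IH]; intros n c; simpl.
  - pose proof (h_pos n); lra.
  - specialize (IH (S n) (child n c b)). rewrite RhS, Rchild in IH.
    pose proof (h_pos n). destruct b; lra.
Qed.

Lemma good_cen n c w : Good n c -> Good (n + length w)%nat (cen n c w).
Proof.
  revert n c; induction w as [|b z IH]; intros n c H; simpl.
  - rewrite Nat.add_0_r; auto.
  - rewrite Nat.add_succ_r. apply (IH (S n)). apply good_child; auto.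
Qed.

Lemma nonneg_pen n c w : Good n c -> 0 <= Q2R (al n c w) /\ 0 <= Q2R (be n c w).
Proof.
  revert n c; induction w as [|b z IH]; intros n c H; simpl.
  - rewrite Q2R_0; lra.
  - destruct (IH (S n) (child n c b) (good_child n c b H)) as [H1 H2].
    rewrite !Q2R_plus, Rsa, Rsb. pose proof (e_pos n). pose proof (good_in n c H).
    destruct b; unfold P in *; split; nra.
Qed.

Lemma pos_cons n c b z : Good n c ->
  0 < Q2R (al n c (b :: z)) /\ 0 < Q2R (be n c (b :: z)).
Proof.
  intros H. simpl.
  destruct (nonneg_pen (S n) (child n c b) z (good_child n c b H)) as [H1 H2].
  rewrite !Q2R_plus, Rsa, Rsb. pose proof (e_pos n). pose proof (good_in n c H).
  destruct b; unfold P in *; split; nra.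
Qed.

Lemma upper n c w x : Good n c -> 0 <= x <= P + LL ->
  Q2R (al n c w) * x + Q2R (be n c w) <= 2 * RM * Q2R (ee n).
Proof.
  revert n c; induction w as [|b z IH]; intros n c H Hx; simpl.
  - rewrite Q2R_0. pose proof (e_pos n). pose proof RM_ge3. nra.
  - specialize (IH (S n) (child n c b) (good_child n c b H) Hx).
    pose proof (e_half n).
    rewrite !Q2R_plus, Rsa, Rsb. pose proof (e_pos n). pose proof (good_in n c H).
    destruct b; unfold RM in *; nra.
Qed.

Lemma al_app n c u z : Q2R (al n c (u ++ z)) =
  Q2R (al n c u) + Q2R (al (n + length u) (cen n c u) z).
Proof.
  revert n c; induction u as [|b u IH]; intros n c; simpl.
  - rewrite Q2R_0, Nat.add_0_r; ring.
  - rewrite !Q2R_plus, IH. replace (n + S (length u))%nat with (S n + length u)%nat by lia. ring.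
Qed.
Lemma be_app n c u z : Q2R (be n c (u ++ z)) =
  Q2R (be n c u) + Q2R (be (n + length u) (cen n c u) z).
Proof.
  revert n c; induction u as [|b u IH]; intros n c; simpl.
  - rewrite Q2R_0, Nat.add_0_r; ring.
  - rewrite !Q2R_plus, IH. replace (n + S (length u))%nat with (S n + length u)%nat by lia. ring.
Qed.
Lemma cen_app n c u z : cen n c (u ++ z) = cen (n + length u) (cen n c u) z.
Proof.
  revert n c; induction u as [|b u IH]; intros n c; simpl.
  - rewrite Nat.add_0_r; reflexivity.
  - rewrite IH. replace (n + S (length u))%nat with (S n + length u)%nat by lia. reflexivity.
Qed.

End Constr.

Lemma al_cons p L n c b z : al p L n c (b :: z) = (sa p L n b + al p L (S n) (child L n c b) z)%Q.
Proof. reflexivity. Qed.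
Lemma be_cons p L n c b z : be p L n c (b :: z) = (sb p L n c b + be p L (S n) (child L n c b) z)%Q.
Proof. reflexivity. Qed.

Theorem lemma25 (s t : R) (hs : 1 <= s) (hst : s < t) :
  exists (a b : word -> Q) (r : word -> R),
    (forall w : word, (2 < a w)%Q /\ (2 < b w)%Q /\ s < r w < t) /\
    (forall v w : word, leW v w -> v <> w ->
       (a v < a w)%Q /\ (b v < b w)%Q) /\
    (forall v w : word, ~ leW v w ->
       linmap (a v) (b v) (r v) > linmap (a w) (b w) (r v)).
Proof.
  destruct (dense_Q s t hst) as [p [Hp1 Hp2]].
  destruct (dense_Q (Q2R p) t Hp2) as [p2 [Hq1 Hq2]].
  set (L := (p2 - p)%Q).
  assert (HLe : Q2R L = Q2R p2 - Q2R p) by (unfold L; apply Q2R_minus).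
  assert (Hp : 1 <= Q2R p) by lra.
  assert (HL : 0 < Q2R L) by lra.
  set (c0 := (p + L / (2 # 1))%Q).
  assert (Hc0 : Q2R c0 = Q2R p + Q2R L / 2) by (unfold c0; rewrite Q2R_plus, Q2R_divc; reflexivity).
  assert (G0 : Good p L 0 c0).
  { unfold Good. rewrite Rh0, Hc0. lra. }
  pose proof (RM_ge3 p L Hp HL) as HRM.
  assert (Hbig : forall w, Q2R (al p L 0 c0 w) <= 1/2 /\ Q2R (be p L 0 c0 w) <= 1/2).
  { intros w.
    pose proof (upper p L Hp HL 0 c0 w 0 G0) as U0.
    pose proof (upper p L Hp HL 0 c0 w 1 G0) as U1.
    rewrite Re0 in U0, U1 by assumption.
    destruct (nonneg_pen p L Hp HL 0 c0 w G0) as [N1 N2].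
    replace (2 * (2 * (Q2R p + Q2R L) + 1) * (1 / (4 * (2 * (Q2R p + Q2R L) + 1)))) with (1/2) in U0, U1 by (field; lra).
    split; [|lra].
    assert (0 <= Q2R L) by lra. specialize (U0 ltac:(lra)). specialize (U1 ltac:(lra)). lra. }
  exists (fun w => ((3 # 1) - al p L 0 c0 w)%Q), (fun w => ((3 # 1) - be p L 0 c0 w)%Q),
         (fun w => Q2R (cen L 0 c0 w)).
  split; [|split].
  - intros w. destruct (Hbig w) as [B1 B2].
    pose proof (cen_bound L HL 0 c0 w) as CB. rewrite Rh0, Hc0 in CB.
    split; [|split].
    + apply Rlt_Qlt. rewrite Q2R_minus, !Q2R_Z. lra.
    + apply Rlt_Qlt. rewrite Q2R_minus, !Q2R_Z. lra.
    + lra.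
  - intros v w [z Hz] Hne. subst v.
    destruct z as [|b z]. { rewrite app_nil_r in Hne. congruence. }
    pose proof (good_cen p L HL 0 c0 w G0) as Gw.
    destruct (pos_cons p L Hp HL _ _ b z Gw) as [P1 P2].
    split; apply Rlt_Qlt; rewrite !Q2R_minus, ?al_app, ?be_app; lra.
  - intros v w Hnle. unfold linmap. rewrite !Q2R_minus, !Q2R_Z.
    set (x := Q2R (cen L 0 c0 v)).
    assert (Hx0 : 0 <= x).
    { pose proof (cen_bound L HL 0 c0 v) as CB. rewrite Rh0, Hc0 in CB. unfold x; lra. }
    cut (Q2R (al p L 0 c0 v) * x + Q2R (be p L 0 c0 v) <
         Q2R (al p L 0 c0 w) * x + Q2R (be p L 0 c0 w)); [intros; lra|].
    destruct (split_words v w) as [Hc|[[b [z Hz]]|[u [b [z1 [z2 [H1 H2]]]]]]].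
    + exfalso; apply Hnle; exact Hc.
    + subst w. rewrite al_app, be_app.
      pose proof (good_cen p L HL 0 c0 v G0) as Gv.
      destruct (pos_cons p L Hp HL _ _ b z Gv) as [P1 P2]. nra.
    + pose proof (good_cen p L HL 0 c0 u G0) as Gu.
      set (n := (0 + length u)%nat) in *.
      set (c := cen L 0 c0 u) in *.
      assert (Hxv : x = Q2R (cen L (S n) (child L n c b) z1)).
      { unfold x. rewrite H1, cen_app. reflexivity. }
      subst v w. rewrite !al_app, !be_app. fold n c. rewrite !al_cons, !be_cons.
      rewrite !Q2R_plus, !Rsa, !Rsb.
      pose proof (good_child p L HL n c b Gu) as Gc.
      pose proof (good_child p L HL n c (negb b) Gu) as Gc'.
      pose proof (cen_bound L HL (S n) (child L n c b) z1) as CB.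
      rewrite <- Hxv, RhS, Rchild in CB.
      pose proof (good_cen p L HL _ _ z1 Gc) as Gx.
      pose proof (good_in p L HL _ _ Gx) as Hxin.
      rewrite <- Hxv in Hxin.
      pose proof (upper p L Hp HL (S n) (child L n c b) z1 x Gc ltac:(lra)) as U.
      rewrite (ReS p L Hp HL) in U.
      destruct (nonneg_pen p L Hp HL (S n) (child L n c (negb b)) z2 Gc') as [N1 N2].
      pose proof (e_pos p L Hp HL n) as He. pose proof (h_pos L HL n) as Hh.
      replace (2 * (2 * (Q2R p + Q2R L) + 1) *
         (Q2R (ee p L n) * Q2R (hh L n) / (7 * (2 * (Q2R p + Q2R L) + 1))))
        with (2/7 * (Q2R (ee p L n) * Q2R (hh L n))) in U by (field; lra).
      assert (N3 : 0 <= Q2R (al p L (S n) (child L n c (negb b)) z2) * x) by nra.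
      destruct b; simpl negb in *.
      * assert (Q2R (ee p L n) * (Q2R (hh L n) / 3) <= Q2R (ee p L n) * (x - Q2R c))
          by (apply Rmult_le_compat_l; lra).
        nra.
      * assert (Q2R (ee p L n) * (Q2R (hh L n) / 3) <= Q2R (ee p L n) * (Q2R c - x))
          by (apply Rmult_le_compat_l; lra).
        nra.
Qed.
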